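(* Let $\mathcal U=\{1,\dots,N\}$, $\mathcal P=\{S_1,\dots,S_r\}$ with $S_i\subseteq\mathcal U$ and $\bigcup_i S_i=\mathcal U$, and let $\alpha$ be a positive integer. Define $\bar A\in\{0,*\}^{N\times N}$ with $\bar A_{ii}=*$ and all off-diagonal entries $0$, $\bar B\in\{0,*\}^{N\times1}$ with all entries $*$, and $\bar C\in\{0,*\}^{r\times N}$ with $\bar C_{ij}=*$ iff $j\in S_i$; set $\gamma=\alpha-1$. For $\bar K\in\{0,*\}^{1\times r}$ let $S(\bar K)=\{S_j:\bar K_{1j}=*\}$. Then $\bar K$ is a (feasible) solution to the Sparsest Resilient Feedback Design Problem for $(\bar A,\bar B,\bar C)$ and $\gamma$, i.e. $\bar K\in\mathcal K_\gamma$, if and only if $S(\bar K)$ is a (feasible) solution of the minimum set multi-covering problem $(\mathcal U,\mathcal P,\alpha)$, i.e. every element of $\mathcal U$ lies in at least $\alpha$ sets of $S(\bar K)$.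
   Context: A structured system $(\bar A,\bar B,\bar C)$ has $\bar A\in\{0,*\}^{n\times n}$, $\bar B\in\{0,*\}^{n\times m}$, $\bar C\in\{0,*\}^{p\times n}$; a numerical realization is real $(A,B,C)$ vanishing wherever the structured matrix is $0$. For $\bar K\in\{0,*\}^{m\times p}$, $[\bar K]=\{K\in\mathbb R^{m\times p}:K_{ij}=0\text{ whenever }\bar K_{ij}=0\}$; $(\bar A,\bar B,\bar C,\bar K)$ has no structurally fixed modes (no SFMs) if some realization satisfies $\bigcap_{K\in[\bar K]}\sigma(A+BKC)=\emptyset$. $\bar K^{\mathcal I}$ is $\bar K$ with entries indexed by $\mathcal I$ set to $0$. $\mathcal K_\gamma=\{\bar K:(\bar A,\bar B,\bar C,\bar K^{\mathcal I})\text{ has no SFMs for all }|\mathcal I|\le\gamma\}$. Sparsest Resilient Feedback Design Problem: minimize the number of $*$ entries $\|\bar K\|_0$ over $\bar K\in\mathcal K_\gamma$. Minimum set multi-covering (MSMC) problem $(\mathcal U,\mathcal P,\alpha)$: find a minimum-cardinality subcollection of $\mathcal P$ covering each element of $\mathcal U$ at least $\alpha$ times. *)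

(* Defs.v *)
From mathcomp Require Import all_boot all_algebra.
From mathcomp Require Import reals Rstruct.
From mathcomp.real_closed Require Import complex.
Set Implicit Arguments. Unset Strict Implicit. Unset Printing Implicit Defensive.
Import GRing.Theory.
Local Open Scope ring_scope.

Notation Real := Rdefinitions.R.

(* A structured matrix in {0,*}^{m x n}: true = '*', false = '0'. *)
Notation smx m n := 'M[bool]_(m, n).

Definition realizes m n (Mb : smx m n) (M : 'M[Real]_(m, n)) : Prop :=
  forall i j, Mb i j = false -> M i j = 0.

Definition in_spectrum n (M : 'M[Real]_n) (l : Real[i]) : Prop :=
  eigenvalue (map_mx (fun x : Real => x%:C%C) M) l.

Definition no_SFM n m p (Ab : smx n n) (Bb : smx n m) (Cb : smx p n)
    (Kb : smx m p) : Prop :=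
  exists (A : 'M[Real]_n) (B : 'M[Real]_(n, m)) (C : 'M[Real]_(p, n)),
    [/\ realizes Ab A, realizes Bb B, realizes Cb C &
      forall l : Real[i], exists K : 'M[Real]_(m, p),
        realizes Kb K /\ ~ in_spectrum (A + B *m K *m C) l].

Definition zero_entries m p (Kb : smx m p) (I : {set 'I_m * 'I_p}) : smx m p :=
  \matrix_(i, j) (Kb i j && ((i, j) \notin I)).

Definition in_K_gamma n m p (Ab : smx n n) (Bb : smx n m) (Cb : smx p n)
    (gamma : nat) (Kb : smx m p) : Prop :=
  forall I : {set 'I_m * 'I_p}, (#|I| <= gamma)%N ->
    no_SFM Ab Bb Cb (zero_entries Kb I).

Definition red_A N : smx N N := \matrix_(i, j) (i == j).
Definition red_B N : smx N 1 := \matrix_(i, j) true.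
Definition red_C N r (S : 'I_r -> {set 'I_N}) : smx r N :=
  \matrix_(i, j) (j \in S i).

Definition multi_covers N r (S : 'I_r -> {set 'I_N}) (J : {set 'I_r})
    (alpha : nat) : Prop :=
  forall u : 'I_N, (alpha <= #|[set j in J | u \in S j]|)%N.

Definition S_of r (Kb : smx 1 r) : {set 'I_r} := [set j | Kb ord0 j].

(* Main.v *)
Require Import Defs.
From mathcomp Require Import all_boot all_algebra.
From mathcomp Require Import reals Rstruct.
From mathcomp.real_closed Require Import complex.
From mathcomp Require Import ring lra zify.
Set Implicit Arguments. Unset Strict Implicit. Unset Printing Implicit Defensive.
Import GRing.Theory Num.Theory.
Local Open Scope ring_scope.

Local Notation RR := Rdefinitions.R.
Definition emb (x : RR) : complex RR := (x%:C)%C.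

Lemma not_spec_unit n (X : 'M[RR]_n) l :
  in_spectrum X l <-> ~~ (map_mx emb X - l%:M \in unitmx).
Proof.
by rewrite /in_spectrum /eigenvalue /eigenspace kermx_eq0 row_free_unit.
Qed.

Lemma sfm_dir1 N r (S : 'I_r -> {set 'I_N}) (Kb : smx 1 r) :
  no_SFM (red_A N) (red_B N) (red_C S) Kb ->
  forall u : 'I_N, exists j, Kb ord0 j && (u \in S j).
Proof.
move=> [A [B [C [rA rB rC H]]]] u.
case: (boolP [exists j, Kb ord0 j && (u \in S j)]) => [/existsP//|/existsPn Hn].
exfalso.
have [K [rK HK]] := H (emb (A u u)).
apply: HK; apply/not_spec_unit; apply/negP => Hu.
set X := (X in X \in unitmx) in Hu.
have w0 : (K *m C) ord0 u = 0.
  rewrite mxE big1 // => l _.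
  have := Hn l; case Kl: (Kb ord0 l) => /= Hl.
    by rewrite (rC l u) ?mulr0 // mxE (negbTE Hl).
  by rewrite (rK ord0 l) ?mul0r // mxE Kl.
pose x : 'cV[complex RR]_N := delta_mx u ord0.
have dx k j : x k j = (k == u)%:R by rewrite /x mxE (ord1 j) eqxx andbT.
have Xx : X *m x = 0.
  apply/matrixP => i j; rewrite [in LHS]mxE (bigD1 u) //= big1 => [|k /negbTE kn]; last first.
    by rewrite dx kn mulr0.
  rewrite addr0 dx eqxx mulr1 /X -mulmxA !mxE big_ord1 w0 mulr0 addr0.
  case: (eqVneq i u) => [->|iu]; first by rewrite mulr1n subrr.
  by rewrite (rA i u) ?mxE ?(negbTE iu) // mulr0n subr0 /emb.
have : x = 0 by rewrite -(mulKmx Hu x) Xx mulmx0.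
by move/matrixP => /(_ u ord0); rewrite !mxE !eqxx; move/eqP; rewrite oner_eq0.
Qed.

Lemma sfm_dir2 N r (S : 'I_r -> {set 'I_N}) (Kb : smx 1 r) :
  (forall u : 'I_N, exists j, Kb ord0 j && (u \in S j)) ->
  no_SFM (red_A N) (red_B N) (red_C S) Kb.
Proof.
move=> Hc.
pose A : 'M[RR]_N := \matrix_(i, j) (if i == j then (i : nat)%:R else 0).
pose B : 'M[RR]_(N, 1) := const_mx 1.
pose C : 'M[RR]_(r, N) := \matrix_(i, j) (if j \in S i then 1 else 0).
exists A, B, C; split.
- by move=> i j; rewrite !mxE => ->.
- by move=> i j; rewrite !mxE.
- by move=> i j; rewrite !mxE => ->.
have Ment K i j : (A + B *m K *m C) i j =
    (if i == j then (i : nat)%:R else 0) + (K *m C) ord0 j.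
  rewrite -mulmxA mxE [A i j]mxE [(B *m _) i j]mxE big_ord1 [B _ _]mxE mul1r. reflexivity.
have HE (K : 'rV[RR]_r) (l : complex RR) (v : 'rV[complex RR]_N) : v *m map_mx emb (A + B *m K *m C) = l *: v ->
   forall j, v ord0 j * (emb (j : nat)%:R - l) + (\sum_i v ord0 i) * emb ((K *m C) ord0 j) = 0.
  move=> Hv j; move/matrixP: Hv => /(_ ord0 j); rewrite [LHS]mxE [RHS]mxE.
  under eq_bigr => i _ do rewrite mxE Ment /emb rmorphD mulrDr.
  rewrite big_split /= (bigD1 j) //= big1 => [|i /negbTE ij]; last by rewrite ij rmorph0 mulr0.
  rewrite eqxx addr0 -mulr_suml => H; rewrite mulrBr (mulrC _ l) -H /emb; ring.
move=> l.
case: (boolP [exists u : 'I_N, l == emb (u : nat)%:R]) => [/existsP [u /eqP lu] | /existsPn Hl].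
- pose K : 'rV[RR]_r := \matrix_(i, j) (if Kb i j then 1 else 0).
  exists K; split; first by move=> i j; rewrite mxE => ->.
  rewrite /in_spectrum; move/eigenvalueP => [v Hv vnz].
  have E := HE K l v Hv.
  have wpos : 0 < (K *m C) ord0 u.
    have [j0 /andP [kj uj]] := Hc u.
    rewrite mxE (bigD1 j0) //= !mxE kj uj mul1r.
    have : 0 <= \sum_(i < r | i != j0) K ord0 i * C i u.
      by apply: sumr_ge0 => i _; rewrite !mxE; case: ifP => _; case: ifP => _; lra.
    lra.
  have wnz : emb ((K *m C) ord0 u) != 0 by rewrite /emb fmorph_eq0; exact: lt0r_neq0.
  have s0 : \sum_i v ord0 i = 0.
    have := E u; rewrite lu subrr mulr0 add0r => /eqP; rewrite mulf_eq0 (negbTE wnz) orbF.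
    by move/eqP.
  have vj j : j != u -> v ord0 j = 0.
    move=> ju; have := E j; rewrite s0 mul0r addr0 => /eqP; rewrite mulf_eq0 => /orP [/eqP//|].
    rewrite lu /emb -rmorphB fmorph_eq0 subr_eq0 eqr_nat => /eqP/val_inj ju'.
    by rewrite ju' eqxx in ju.
  have vu : v ord0 u = 0 by rewrite -s0 (bigD1 u) //= big1 ?addr0 // => j /vj.
  apply: (negP vnz); apply/eqP/rowP => j; rewrite mxE; case: (eqVneq j u) => [->//|/vj //].
- exists 0; split; first by move=> i j; rewrite mxE.
  rewrite /in_spectrum; move/eigenvalueP => [v Hv vnz].
  have E := HE 0 l v Hv.
  apply: (negP vnz); apply/eqP/rowP => j; rewrite mxE.
  have := E j; rewrite mul0mx mxE /emb rmorph0 mulr0 addr0 => /eqP; rewrite mulf_eq0 => /orP [/eqP//|].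
  by rewrite subr_eq0 eq_sym (negbTE (Hl j)).
Qed.

Theorem lemma3 (N r : nat) (S : 'I_r -> {set 'I_N}) (alpha : nat)
    (Hcover : \bigcup_(i < r) S i = [set: 'I_N]) (Halpha : (0 < alpha)%N)
    (Kb : 'M[bool]_(1, r)) :
  in_K_gamma (red_A N) (red_B N) (red_C S) (alpha - 1) Kb <->
  multi_covers S (S_of Kb) alpha.
Proof.
have finj : injective (fun j : 'I_r => (@ord0 0, j)) by move=> a b [].
split.
- move=> HK u; rewrite leqNgt; apply/negP => Hlt.
  pose I := [set (@ord0 0, j) | j in [set j in S_of Kb | u \in S j]].
  have cI : (#|I| <= alpha - 1)%N by rewrite card_imset //; lia.
  have [j /andP [kj uj]] := sfm_dir1 (HK I cI) u.
  rewrite mxE in kj; case/andP: kj => kj nI.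
  apply: (negP nI); apply/imsetP; exists j => //.
  by rewrite !inE kj uj.
- move=> Hm I cI; apply: sfm_dir2 => u.
  case: (boolP [exists j, zero_entries Kb I ord0 j && (u \in S j)]) => [/existsP//|/existsPn Hn].
  exfalso.
  have : [set (@ord0 0, j) | j in [set j in S_of Kb | u \in S j]] \subset I.
    apply/subsetP => x /imsetP [j jJ ->]; move: jJ; rewrite !inE => /andP [kj uj].
    by have := Hn j; rewrite mxE kj uj /= andbT negbK.
  move/subset_leq_card; rewrite card_imset //.
  move=> h2; have h1 := Hm u; have := leq_trans h1 (leq_trans h2 cI); by rewrite subn1 leqNgt ltn_predL Halpha.
Qed.
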